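(* Let $T_{p,q}(x)=\dfrac{U_p\left(\frac{\sin x}{x}\right)}{U_q(\cos x)}$ for $x\in(0,\pi/2)$ and $p,q\in\mathbb{R}$. Then (i) when $q>1$, $T_{p,q}$ is increasing on $(0,\pi/2)$ for $p\le3q-\frac85$; (ii) when $q=1$, $T_{p,q}$ is increasing on $(0,\pi/2)$ for $p\le\frac75$ and decreasing on $(0,\pi/2)$ for $p\ge\frac{\pi^2}{4}-1$; (iii) when $\frac{34}{35}<q<1$, $T_{p,q}$ is decreasing on $(0,\pi/2)$ for $p\ge\frac{\pi^2}{4}-1$; (iv) when $q\le\frac{34}{35}$, $T_{p,q}$ is decreasing on $(0,\pi/2)$ for $p\ge3q-\frac85$.
   Context: For $t\in(0,1)$: $U_p(t)=\frac{1-t^p}{p}$ if $p\ne0$ and $U_0(t)=-\ln t$. *)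

(* Defs.v *)
From Stdlib Require Import Reals.
Open Scope R_scope.

Definition U (p t : R) : R :=
  if Req_EM_T p 0 then - ln t else (1 - Rpower t p) / p.

Definition T (p q x : R) : R := U p (sin x / x) / U q (cos x).

Definition increasing_on_0_pi2 (f : R -> R) : Prop :=
  forall x y, 0 < x -> x < y -> y < PI / 2 -> f x < f y.
Definition decreasing_on_0_pi2 (f : R -> R) : Prop :=
  forall x y, 0 < x -> x < y -> y < PI / 2 -> f y < f x.

(* Main.v *)
Require Import Defs.
From Stdlib Require Import Reals Lra Lia Psatz QArith Qreals List.
Import ListNotations.
From Coquelicot Require Import Coquelicot.
Open Scope R_scope.
Open Scope R_scope.

Lemma cont_of_deriv (f : R -> R) (x d : R) : is_derive f x d -> continuity_pt f x.
Proof.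
  intros H. apply continuity_pt_filterlim. apply (@ex_derive_continuous R_AbsRing R_NormedModule f x). exists d; exact H.
Qed.

Lemma incr_of_deriv (f df : R -> R) (a b : R) :
  (forall t, a < t < b -> is_derive f t (df t)) ->
  (forall t, a < t < b -> 0 < df t) ->
  forall x y, a < x -> x < y -> y < b -> f x < f y.
Proof.
  intros Hd Hp x y Hx Hxy Hy.
  destruct (MVT_gen f x y df) as [c [Hc Heq]].
  - intros t Ht. rewrite Rmin_left in Ht by lra. rewrite Rmax_right in Ht by lra.
    apply Hd; lra.
  - intros t Ht. rewrite Rmin_left in Ht by lra. rewrite Rmax_right in Ht by lra.
    apply (cont_of_deriv _ _ (df t)). apply Hd; lra.
  - rewrite Rmin_left in Hc by lra. rewrite Rmax_right in Hc by lra.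
    assert (0 < df c) by (apply Hp; lra).
    assert (0 < df c * (y - x)) by (apply Rmult_lt_0_compat; lra). lra.
Qed.

Lemma nonneg_of_deriv (f df : R -> R) :
  f 0 = 0 ->
  (forall t, 0 <= t -> is_derive f t (df t)) ->
  (forall t, 0 <= t -> 0 <= df t) ->
  forall x, 0 <= x -> 0 <= f x.
Proof.
  intros H0 Hd Hp x Hx.
  destruct (Req_dec x 0) as [->|Hx0]; [lra|].
  destruct (MVT_gen f 0 x df) as [c [Hc Heq]].
  - intros t Ht. rewrite Rmin_left in Ht by lra. rewrite Rmax_right in Ht by lra.
    apply Hd; lra.
  - intros t Ht. rewrite Rmin_left in Ht by lra. rewrite Rmax_right in Ht by lra.
    apply (cont_of_deriv _ _ (df t)). apply Hd; lra.
  - rewrite Rmin_left in Hc by lra. rewrite Rmax_right in Hc by lra.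
    assert (0 <= df c) by (apply Hp; lra).
    assert (0 <= df c * (x - 0)) by (apply Rmult_le_pos; lra). lra.
Qed.

(* generic monotone l'Hopital-type lemma *)
Lemma GL (b : R) (f g r df dg dr : R -> R) :
  (forall t, 0 < t < b -> is_derive f t (df t)) ->
  (forall t, 0 < t < b -> is_derive g t (dg t)) ->
  (forall t, 0 < t < b -> is_derive r t (dr t)) ->
  (forall t, 0 < t < b -> df t = r t * dg t) ->
  (forall t, 0 < t < b -> 0 < dg t) ->
  (forall t, 0 < t < b -> 0 < g t) ->
  (forall t, 0 < t < b -> 0 < r t) ->
  (forall t, 0 < t < b -> 0 < dr t) ->
  (forall d m, 0 < d -> 0 < m -> exists e, 0 < e < m /\ f e < d) ->
  forall x y, 0 < x -> x < y -> y < b -> f x / g x < f y / g y.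
Proof.
  intros Hf Hg Hr Hfr Hdg Hgp Hrp Hdr Hlim.
  set (H := fun t => r t * g t - f t).
  assert (HdH : forall t, 0 < t < b -> is_derive H t (dr t * g t)).
  { intros t Ht. unfold H.
    apply (is_derive_ext (fun t => minus (mult (r t) (g t)) (f t))).
    { intros; reflexivity. }
    replace (dr t * g t) with (minus (plus (mult (dr t) (g t)) (mult (r t) (dg t))) (df t)).
    2:{ rewrite Hfr by exact Ht. unfold minus, plus, mult, opp; simpl. ring. }
    apply (@is_derive_minus R_AbsRing R_NormedModule); [|apply Hf; exact Ht].
    apply (@is_derive_mult R_AbsRing); [apply Hr; exact Ht| apply Hg; exact Ht|].
    intros; unfold mult; simpl; ring. }
  assert (Hinc : forall x y, 0 < x -> x < y -> y < b -> H x < H y).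
  { apply (incr_of_deriv H (fun t => dr t * g t) 0 b); [exact HdH|].
    intros t Ht. apply Rmult_lt_0_compat; auto. }
  assert (Hpos : forall t, 0 < t < b -> 0 < H t).
  { intros t Ht.
    assert (Hm : 0 <= H (t/2)).
    { destruct (Rle_or_lt 0 (H (t/2))) as [h|h]; [exact h|].
      destruct (Hlim (- H (t/2)) (t/2)) as [e [He Hfe]]; try lra.
      assert (H e < H (t/2)) by (apply Hinc; lra).
      assert (0 < r e * g e) by (apply Rmult_lt_0_compat; [apply Hrp|apply Hgp]; lra).
      unfold H at 1 in H0. lra. }
    assert (H (t/2) < H t) by (apply Hinc; lra). lra. }
  apply (incr_of_deriv (fun t => f t / g t) (fun t => (df t * g t - f t * dg t) / g t ^ 2) 0 b).
  - intros t Ht. apply is_derive_div; [apply Hf|apply Hg|]; auto.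
    specialize (Hgp t Ht); lra.
  - intros t Ht. rewrite Hfr by exact Ht.
    specialize (Hpos t Ht). specialize (Hgp t Ht). specialize (Hdg t Ht). unfold H in Hpos.
    apply Rdiv_lt_0_compat; [|apply pow_lt; lra].
    replace (r t * dg t * g t - f t * dg t) with (dg t * (r t * g t - f t)) by ring.
    apply Rmult_lt_0_compat; lra.
Qed.

Open Scope R_scope.

Lemma dplus (f g : R -> R) x a b : is_derive f x a -> is_derive g x b ->
  is_derive (fun t => f t + g t) x (a + b).
Proof. intros; apply (@is_derive_plus R_AbsRing R_NormedModule); auto. Qed.
Lemma dminus (f g : R -> R) x a b : is_derive f x a -> is_derive g x b ->
  is_derive (fun t => f t - g t) x (a - b).
Proof. intros; apply (@is_derive_minus R_AbsRing R_NormedModule); auto. Qed.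
Lemma dext (f g : R -> R) x a b : (forall t, f t = g t) -> a = b -> is_derive f x a -> is_derive g x b.
Proof. intros H -> Hd. apply (is_derive_ext f); auto. Qed.

Fixpoint ca (k : nat) : R := match k with O => 1 | S k' => - ca k' / ((2 * INR k' + 1) * (2 * INR k' + 2)) end.
Definition sa (k : nat) : R := ca k / (2 * INR k + 1).
Fixpoint sinP (n : nat) (x : R) : R := match n with O => 0 | S n' => sinP n' x + sa n' * x ^ (2 * n' + 1) end.
Fixpoint cosP (n : nat) (x : R) : R := match n with O => 0 | S n' => cosP n' x + ca n' * x ^ (2 * n') end.

Lemma dmon (c : R) (m : nat) x : is_derive (fun t => c * t ^ m) x (c * (INR m * x ^ (pred m))).
Proof.
  apply is_derive_scal.
  assert (H := is_derive_pow (fun t => t) m x 1 (@is_derive_id R_AbsRing x)).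
  simpl in H. replace (INR m * x ^ pred m) with (INR m * 1 * x ^ pred m) by ring. exact H.
Qed.

Lemma sinP_deriv n x : is_derive (sinP n) x (cosP n x).
Proof.
  induction n as [|n IH].
  - eapply dext; [intros; reflexivity | reflexivity | apply (@is_derive_const R_AbsRing R_NormedModule)].
  - change (sinP (S n)) with (fun t => sinP n t + sa n * t ^ (2 * n + 1)).
    change (cosP (S n) x) with (cosP n x + ca n * x ^ (2 * n)).
    eapply dext; [intros; reflexivity | | apply dplus; [exact IH | apply dmon]].
    replace (pred (2 * n + 1)) with (2 * n)%nat by lia.
    unfold sa. rewrite !plus_INR, !mult_INR. simpl (INR 2). simpl (INR 1).
    assert (2 * INR n + 1 <> 0) by (pose proof (pos_INR n); lra). apply (f_equal (Rplus (cosP n x))). replace ((1+1) * INR n + 1) with (2 * INR n + 1) by ring. field; auto.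
Qed.

Lemma cosP_deriv n x : is_derive (cosP (S n)) x (- sinP n x).
Proof.
  induction n as [|n IH].
  - simpl. eapply dext; [intros; reflexivity | | apply (@is_derive_const R_AbsRing R_NormedModule)].
    simpl. unfold zero; simpl. ring.
  - change (cosP (S (S n))) with (fun t => cosP (S n) t + ca (S n) * t ^ (2 * S n)).
    eapply dext; [intros; reflexivity | | apply dplus; [exact IH | apply dmon]].
    replace (pred (2 * S n)) with (2 * n + 1)%nat by lia.
    simpl sinP. simpl ca. unfold sa. rewrite mult_INR. change (INR 2) with 2.
    replace (n + (n + 0) + 1)%nat with (2 * n + 1)%nat by lia. rewrite (S_INR n). simpl (INR 1). change (INR 0) with 0. match goal with |- ?a = ?b => change (@eq R a b) end. field. pose proof (pos_INR n). lra.
Qed.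

Lemma sinP_0 n : sinP n 0 = 0.
Proof. induction n; simpl; [reflexivity|]. rewrite IHn. rewrite pow_i by lia. ring. Qed.
Lemma cosP_0 n : cosP (S n) 0 = 1.
Proof. induction n; simpl in *; [ring|]. rewrite IHn. rewrite pow_i by lia. ring. Qed.

Lemma taylor_sin_of_cos n :
  (forall x, 0 <= x -> 0 <= (-1) ^ n * (cos x - cosP n x)) ->
  forall x, 0 <= x -> 0 <= (-1) ^ n * (sin x - sinP n x).
Proof.
  intros Hc. apply (nonneg_of_deriv _ (fun x => (-1) ^ n * (cos x - cosP n x))).
  - rewrite sin_0, sinP_0. ring.
  - intros t _. apply is_derive_scal. apply dminus; [apply is_derive_sin | apply sinP_deriv].
  - exact Hc.
Qed.

Lemma taylor_cos_of_sin n :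
  (forall x, 0 <= x -> 0 <= (-1) ^ n * (sin x - sinP n x)) ->
  forall x, 0 <= x -> 0 <= (-1) ^ (S n) * (cos x - cosP (S n) x).
Proof.
  intros Hs. apply (nonneg_of_deriv _ (fun x => (-1) ^ n * (sin x - sinP n x))).
  - rewrite cos_0, cosP_0. ring.
  - intros t _. eapply dext; [intros; reflexivity| |apply is_derive_scal; apply dminus; [apply is_derive_cos | apply cosP_deriv]].
    simpl. ring.
  - exact Hs.
Qed.

Lemma taylor n : (1 <= n)%nat -> forall x, 0 <= x ->
  0 <= (-1) ^ n * (cos x - cosP n x) /\ 0 <= (-1) ^ n * (sin x - sinP n x).
Proof.
  intros Hn. induction n as [|n IH]; [lia|].
  destruct (Nat.eq_dec n 0) as [->|Hn0].
  - assert (Hc : forall x, 0 <= x -> 0 <= (-1) ^ 1 * (cos x - cosP 1 x)).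
    { intros x _. simpl. pose proof (COS_bound x). lra. }
    intros x Hx. split; [apply Hc; auto | apply taylor_sin_of_cos; auto].
  - assert (Hc : forall x, 0 <= x -> 0 <= (-1) ^ (S n) * (cos x - cosP (S n) x)).
    { apply taylor_cos_of_sin. intros x Hx. apply (IH ltac:(lia) x Hx). }
    intros x Hx. split; [apply Hc; auto | apply taylor_sin_of_cos; auto].
Qed.

Open Scope R_scope.

Fixpoint hornerR (l : list Q) (z : R) : R :=
  match l with nil => 0 | a :: l' => Q2R a + z * hornerR l' z end.

Fixpoint ubQ (l : list Q) (z0 z1 : Q) : Q :=
  match l with
  | nil => 0%Q
  | a :: l' => let h := ubQ l' z0 z1 in
      if Qle_bool 0 h then Qred (a + z1 * h)%Q else Qred (a + z0 * h)%Q
  end.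

Lemma Q2R_red q : Q2R (Qred q) = Q2R q.
Proof. apply Qeq_eqR. apply Qred_correct. Qed.

Lemma ubQ_sound l z0 z1 z : 0 <= Q2R z0 -> Q2R z0 <= z <= Q2R z1 ->
  hornerR l z <= Q2R (ubQ l z0 z1).
Proof.
  intros H0 Hz. induction l as [|a l IH]; cbn [hornerR ubQ].
  - rewrite RMicromega.Q2R_0. lra.
  - destruct (Qle_bool 0 (ubQ l z0 z1)) eqn:E; rewrite Q2R_red, Q2R_plus, Q2R_mult.
    + apply Qle_bool_iff in E. apply Qle_Rle in E. rewrite RMicromega.Q2R_0 in E.
      apply Rplus_le_compat_l. apply Rle_trans with (z * Q2R (ubQ l z0 z1)).
      * apply Rmult_le_compat_l; lra.
      * apply Rmult_le_compat_r; lra.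
    + assert (E' : Q2R (ubQ l z0 z1) < 0).
      { destruct (Rlt_or_le (Q2R (ubQ l z0 z1)) 0) as [h|h]; auto.
        exfalso. rewrite <- RMicromega.Q2R_0 in h. apply Rle_Qle in h. apply Qle_bool_iff in h. congruence. }
      apply Rplus_le_compat_l. apply Rle_trans with (z * Q2R (ubQ l z0 z1)).
      * apply Rmult_le_compat_l; lra.
      * nra.
Qed.

Definition pieceneg (l : list Q) (a step : Q) : bool := negb (Qle_bool 0 (ubQ l a (a + step))).

Lemma pieceneg_sound l a step z : 0 <= Q2R a -> pieceneg l a step = true ->
  Q2R a <= z <= Q2R a + Q2R step -> hornerR l z < 0.
Proof.
  intros Ha Hp Hz. unfold pieceneg in Hp.
  assert (H := ubQ_sound l a (a + step) z Ha ltac:(rewrite Q2R_plus; lra)).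
  destruct (Qle_bool 0 (ubQ l a (a + step))) eqn:E; [discriminate|].
  destruct (Rlt_or_le (Q2R (ubQ l a (a + step))) 0) as [h|h]; [lra|].
  exfalso. rewrite <- RMicromega.Q2R_0 in h. apply Rle_Qle in h. apply Qle_bool_iff in h. congruence.
Qed.

Fixpoint checkneg (l : list Q) (a step : Q) (n : nat) : bool :=
  match n with
  | O => pieceneg l a step
  | S n' => pieceneg l a step && checkneg l (Qred (a + step)) step n'
  end.

Lemma checkneg_sound l n : forall a step z, 0 <= Q2R a -> 0 <= Q2R step ->
  checkneg l a step n = true -> Q2R a <= z <= Q2R a + (INR n + 1) * Q2R step ->
  hornerR l z < 0.
Proof.
  induction n as [|n IH]; intros a step z Ha Hs Hc Hz; simpl in Hc.
  - apply (pieceneg_sound l a step); auto. simpl in Hz. lra.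
  - apply andb_true_iff in Hc as [H1 H2].
    destruct (Rle_or_lt z (Q2R a + Q2R step)).
    + apply (pieceneg_sound l a step); auto. lra.
    + apply (IH (Qred (a + step)) step); auto; rewrite Q2R_red, Q2R_plus; try lra.
      rewrite S_INR in Hz. lra.
Qed.

Open Scope R_scope.

Lemma tay_sin_lo n x : ((1 <=? n)%nat && Nat.even n)%bool = true -> 0 <= x -> sinP n x <= sin x.
Proof.
  intros Hn Hx. apply andb_true_iff in Hn as [H1 H2]. apply Nat.leb_le in H1.
  destruct (taylor n H1 x Hx) as [_ H]. apply Nat.even_spec in H2 as [k ->]. rewrite pow_1_even in H. lra.
Qed.
Lemma tay_cos_lo n x : ((1 <=? n)%nat && Nat.even n)%bool = true -> 0 <= x -> cosP n x <= cos x.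
Proof.
  intros Hn Hx. apply andb_true_iff in Hn as [H1 H2]. apply Nat.leb_le in H1.
  destruct (taylor n H1 x Hx) as [H _]. apply Nat.even_spec in H2 as [k ->]. rewrite pow_1_even in H. lra.
Qed.
Lemma tay_sin_hi n x : ((1 <=? n)%nat && Nat.odd n)%bool = true -> 0 <= x -> sin x <= sinP n x.
Proof.
  intros Hn Hx. apply andb_true_iff in Hn as [H1 H2]. apply Nat.leb_le in H1.
  destruct (taylor n H1 x Hx) as [_ H]. apply Nat.odd_spec in H2 as [k ->]. replace (2 * k + 1)%nat with (S (2 * k)) in * by lia. rewrite pow_1_odd in H. lra.
Qed.
Lemma tay_cos_hi n x : ((1 <=? n)%nat && Nat.odd n)%bool = true -> 0 <= x -> cos x <= cosP n x.
Proof.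
  intros Hn Hx. apply andb_true_iff in Hn as [H1 H2]. apply Nat.leb_le in H1.
  destruct (taylor n H1 x Hx) as [H _]. apply Nat.odd_spec in H2 as [k ->]. replace (2 * k + 1)%nat with (S (2 * k)) in * by lia. rewrite pow_1_odd in H. lra.
Qed.
Lemma mulb_pos c m u v x : 0 < c -> 0 <= x -> u <= v -> c * x ^ m * u <= c * x ^ m * v.
Proof. intros. apply Rmult_le_compat_l; auto. apply Rmult_le_pos; [lra|apply pow_le; auto]. Qed.
Lemma mulb_neg c m u v x : c < 0 -> 0 <= x -> u <= v -> c * x ^ m * v <= c * x ^ m * u.
Proof. intros. assert (0 <= x^m) by (apply pow_le; auto). apply Rmult_le_compat_neg_l; auto. assert (0 <= (-c) * x^m) by (apply Rmult_le_pos; lra). lra. Qed.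
Lemma sc1 x : sin x ^ 2 + cos x ^ 2 = 1.
Proof. pose proof (sin2_cos2 x). unfold Rsqr in H. lra. Qed.
Lemma sin3 x : sin (3 * x) = sin (2 * x) * cos x + cos (2 * x) * sin x.
Proof. replace (3 * x) with (2 * x + x) by ring. apply sin_plus. Qed.
Lemma cos3 x : cos (3 * x) = cos (2 * x) * cos x - sin (2 * x) * sin x.
Proof. replace (3 * x) with (2 * x + x) by ring. apply cos_plus. Qed.
Ltac normP H := cbn [sinP cosP Nat.mul Nat.add] in H; try unfold sa in H; cbn [ca] in H;
  repeat rewrite INR_IZR_INZ in H; cbn [Z.of_nat Pos.of_succ_nat Pos.succ] in H.

Open Scope R_scope.
Lemma I1poly x : 0 < x -> x^2 <= (987/400) -> 0 < (x * sin x ^ 2 - 3 * cos x * (sin x - x * cos x)) .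
Proof.
  intros Hx HZ. assert (Hx0 : 0 <= x) by lra.
  assert (B1 : (1)*x^1*cosP 6 (2*x) <= (1)*x^1*cos (2*x)).
  { apply mulb_pos; [lra|lra|apply (tay_cos_lo 6); [reflexivity|lra]]. }
  assert (B2 : (-3/2)*x^0*sinP 7 (2*x) <= (-3/2)*x^0*sin (2*x)).
  { apply mulb_neg; [lra|lra|apply (tay_sin_hi 7); [reflexivity|lra]]. }
  assert (Hid : (x * sin x ^ 2 - 3 * cos x * (sin x - x * cos x)) = (2)*x^1 + (1)*x^1*cos (2*x) + (-3/2)*x^0*sin (2*x)).
  { rewrite ?sin3, ?cos3, ?sin_2a, ?cos_2a. apply Rminus_diag_uniq. match goal with |- ?a = ?b => change (@eq R a b) end.
    transitivity ((sin x^2 + cos x^2 - 1) * ((2)*x^1)); [field|]. rewrite sc1; field. }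
  assert (Hpoly : (2)*x^1 + (1)*x^1*cosP 6 (2*x) + (-3/2)*x^0*sinP 7 (2*x) = -(x^5 * hornerR [(-4#15); (16#315); (-4#945); (32#155925); (4#2027025)] (x^2))).
  { cbn [sinP cosP hornerR Nat.mul Nat.add]. unfold sa. cbn [ca Nat.mul Nat.add]. rewrite ?INR_IZR_INZ. cbn [Z.of_nat Pos.of_succ_nat Pos.succ]. unfold Q2R; cbn [Qnum Qden]. match goal with |- ?a = ?b => change (@eq R a b) end. field. }
  assert (Hh : hornerR [(-4#15); (16#315); (-4#945); (32#155925); (4#2027025)] (x^2) < 0).
  { apply (checkneg_sound _ 0 (0#1) (987#400)); [unfold Q2R; simpl; lra|unfold Q2R; simpl; lra|vm_compute; reflexivity|]. split; [unfold Q2R; simpl; nra|]. unfold Q2R; simpl; lra. }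
  assert (Hv : 0 < x^5) by (apply pow_lt; lra).
  assert (Hm : x^5 * hornerR [(-4#15); (16#315); (-4#945); (32#155925); (4#2027025)] (x^2) < 0) by (rewrite <- (Rmult_0_r (x^5)); apply Rmult_lt_compat_l; lra).
  lra.
Qed.

Lemma I2poly x : 0 < x -> x^2 <= (987/400) -> 0 < (-(7/5) * (sin x - x * cos x)^2 + x^2 * sin x^2 - sin x * (sin x - x * cos x) - 2 * x * cos x * (sin x - x * cos x)) .
Proof.
  intros Hx HZ. assert (Hx0 : 0 <= x) by lra.
  assert (B2 : (6/5)*x^0*cosP 8 (2*x) <= (6/5)*x^0*cos (2*x)).
  { apply mulb_pos; [lra|lra|apply (tay_cos_lo 8); [reflexivity|lra]]. }
  assert (B3 : (-1/5)*x^2*cosP 7 (2*x) <= (-1/5)*x^2*cos (2*x)).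
  { apply mulb_neg; [lra|lra|apply (tay_cos_hi 7); [reflexivity|lra]]. }
  assert (B4 : (9/10)*x^1*sinP 8 (2*x) <= (9/10)*x^1*sin (2*x)).
  { apply mulb_pos; [lra|lra|apply (tay_sin_lo 8); [reflexivity|lra]]. }
  assert (Hid : (-(7/5) * (sin x - x * cos x)^2 + x^2 * sin x^2 - sin x * (sin x - x * cos x) - 2 * x * cos x * (sin x - x * cos x)) = (-6/5)*x^0 + (4/5)*x^2 + (6/5)*x^0*cos (2*x) + (-1/5)*x^2*cos (2*x) + (9/10)*x^1*sin (2*x)).
  { rewrite ?sin3, ?cos3, ?sin_2a, ?cos_2a. apply Rminus_diag_uniq. match goal with |- ?a = ?b => change (@eq R a b) end.
    transitivity ((sin x^2 + cos x^2 - 1) * ((-6/5) + (4/5)*x^2)); [field|]. rewrite sc1; field. }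
  assert (Hpoly : (-6/5)*x^0 + (4/5)*x^2 + (6/5)*x^0*cosP 8 (2*x) + (-1/5)*x^2*cosP 7 (2*x) + (9/10)*x^1*sinP 8 (2*x) = -(x^8 * hornerR [(-4#1575); (8#23625); (-16#779625); (32#42567525); (8#354729375)] (x^2))).
  { cbn [sinP cosP hornerR Nat.mul Nat.add]. unfold sa. cbn [ca Nat.mul Nat.add]. rewrite ?INR_IZR_INZ. cbn [Z.of_nat Pos.of_succ_nat Pos.succ]. unfold Q2R; cbn [Qnum Qden]. match goal with |- ?a = ?b => change (@eq R a b) end. field. }
  assert (Hh : hornerR [(-4#1575); (8#23625); (-16#779625); (32#42567525); (8#354729375)] (x^2) < 0).
  { apply (checkneg_sound _ 0 (0#1) (987#400)); [unfold Q2R; simpl; lra|unfold Q2R; simpl; lra|vm_compute; reflexivity|]. split; [unfold Q2R; simpl; nra|]. unfold Q2R; simpl; lra. }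
  assert (Hv : 0 < x^8) by (apply pow_lt; lra).
  assert (Hm : x^8 * hornerR [(-4#1575); (8#23625); (-16#779625); (32#42567525); (8#354729375)] (x^2) < 0) by (rewrite <- (Rmult_0_r (x^8)); apply Rmult_lt_compat_l; lra).
  lra.
Qed.

Lemma I4poly x : 0 < x -> x^2 <= (987/400) -> (-(46/35) * cos x * (sin x - x * cos x)^2 + (-(1/35)) * x * sin x^2 * (sin x - x * cos x) + x^2 * sin x^2 * cos x - sin x * cos x * (sin x - x * cos x) - 2 * x * cos x^2 * (sin x - x * cos x)) < 0 .
Proof.
  intros Hx HZ. assert (Hx0 : 0 <= x) by lra.
  assert (B0 : (-81/140)*x^0*cos x <= (-81/140)*x^0*cosP 8 x).
  { apply mulb_neg; [lra|lra|apply (tay_cos_lo 8); [reflexivity|lra]]. }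
  assert (B1 : (27/35)*x^2*cos x <= (27/35)*x^2*cosP 7 x).
  { apply mulb_pos; [lra|lra|apply (tay_cos_hi 7); [reflexivity|lra]]. }
  assert (B2 : (81/140)*x^0*cos (3*x) <= (81/140)*x^0*cosP 7 (3*x)).
  { apply mulb_pos; [lra|lra|apply (tay_cos_hi 7); [reflexivity|lra]]. }
  assert (B3 : (-3/35)*x^2*cos (3*x) <= (-3/35)*x^2*cosP 8 (3*x)).
  { apply mulb_neg; [lra|lra|apply (tay_cos_lo 8); [reflexivity|lra]]. }
  assert (B4 : (27/70)*x^1*sin x <= (27/70)*x^1*sinP 7 x).
  { apply mulb_pos; [lra|lra|apply (tay_sin_hi 7); [reflexivity|lra]]. }
  assert (B5 : (29/70)*x^1*sin (3*x) <= (29/70)*x^1*sinP 7 (3*x)).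
  { apply mulb_pos; [lra|lra|apply (tay_sin_hi 7); [reflexivity|lra]]. }
  assert (Hid : (-(46/35) * cos x * (sin x - x * cos x)^2 + (-(1/35)) * x * sin x^2 * (sin x - x * cos x) + x^2 * sin x^2 * cos x - sin x * cos x * (sin x - x * cos x) - 2 * x * cos x^2 * (sin x - x * cos x)) = (-81/140)*x^0*cos x + (27/35)*x^2*cos x + (81/140)*x^0*cos (3*x) + (-3/35)*x^2*cos (3*x) + (27/70)*x^1*sin x + (29/70)*x^1*sin (3*x)).
  { rewrite ?sin3, ?cos3, ?sin_2a, ?cos_2a. apply Rminus_diag_uniq. match goal with |- ?a = ?b => change (@eq R a b) end.
    transitivity ((sin x^2 + cos x^2 - 1) * ((-81/140)*cos x^1 + (27/70)*x^1*sin x^1 + (27/35)*x^2*cos x^1)); [field|]. rewrite sc1; field. }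
  assert (Hpoly : (-81/140)*x^0*cosP 8 x + (27/35)*x^2*cosP 7 x + (81/140)*x^0*cosP 7 (3*x) + (-3/35)*x^2*cosP 8 (3*x) + (27/70)*x^1*sinP 7 x + (29/70)*x^1*sinP 7 (3*x) = (x^10 * hornerR [(-16#18375); (8#40425); (13229#1205428224); (59049#12556544000)] (x^2))).
  { cbn [sinP cosP hornerR Nat.mul Nat.add]. unfold sa. cbn [ca Nat.mul Nat.add]. rewrite ?INR_IZR_INZ. cbn [Z.of_nat Pos.of_succ_nat Pos.succ]. unfold Q2R; cbn [Qnum Qden]. match goal with |- ?a = ?b => change (@eq R a b) end. field. }
  assert (Hh : hornerR [(-16#18375); (8#40425); (13229#1205428224); (59049#12556544000)] (x^2) < 0).
  { apply (checkneg_sound _ 0 (0#1) (987#400)); [unfold Q2R; simpl; lra|unfold Q2R; simpl; lra|vm_compute; reflexivity|]. split; [unfold Q2R; simpl; nra|]. unfold Q2R; simpl; lra. }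
  assert (Hv : 0 < x^10) by (apply pow_lt; lra).
  assert (Hm : x^10 * hornerR [(-16#18375); (8#40425); (13229#1205428224); (59049#12556544000)] (x^2) < 0) by (rewrite <- (Rmult_0_r (x^10)); apply Rmult_lt_compat_l; lra).
  lra.
Qed.

Lemma I3poly x : 0 < x -> x^2 <= (9/4) -> (-(7476089/16000000) * (sin x - x * cos x)^2 + x^2 * sin x^2 - (2 * sin x + x * cos x) * (sin x - x * cos x)) < 0 .
Proof.
  intros Hx HZ. assert (Hx0 : 0 <= x) by lra.
  assert (B2 : (39476089/32000000)*x^0*cos (2*x) <= (39476089/32000000)*x^0*cosP 7 (2*x)).
  { apply mulb_pos; [lra|lra|apply (tay_cos_hi 7); [reflexivity|lra]]. }
  assert (B3 : (-7476089/32000000)*x^2*cos (2*x) <= (-7476089/32000000)*x^2*cosP 6 (2*x)).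
  { apply mulb_neg; [lra|lra|apply (tay_cos_lo 6); [reflexivity|lra]]. }
  assert (B4 : (15476089/16000000)*x^1*sin (2*x) <= (15476089/16000000)*x^1*sinP 7 (2*x)).
  { apply mulb_pos; [lra|lra|apply (tay_sin_hi 7); [reflexivity|lra]]. }
  assert (Hid : (-(7476089/16000000) * (sin x - x * cos x)^2 + x^2 * sin x^2 - (2 * sin x + x * cos x) * (sin x - x * cos x)) = (-39476089/32000000)*x^0 + (24523911/32000000)*x^2 + (39476089/32000000)*x^0*cos (2*x) + (-7476089/32000000)*x^2*cos (2*x) + (15476089/16000000)*x^1*sin (2*x)).
  { rewrite ?sin3, ?cos3, ?sin_2a, ?cos_2a. apply Rminus_diag_uniq. match goal with |- ?a = ?b => change (@eq R a b) end.
    transitivity ((sin x^2 + cos x^2 - 1) * ((-39476089/32000000) + (24523911/32000000)*x^2)); [field|]. rewrite sc1; field. }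
  assert (Hpoly : (-39476089/32000000)*x^0 + (24523911/32000000)*x^2 + (39476089/32000000)*x^0*cosP 7 (2*x) + (-7476089/32000000)*x^2*cosP 6 (2*x) + (15476089/16000000)*x^1*sinP 7 (2*x) = (x^6 * hornerR [(-1076089#144000000); (6777541#1680000000); (-35284801#75600000000); (50236979#1871100000000); (15476089#12162150000000)] (x^2))).
  { cbn [sinP cosP hornerR Nat.mul Nat.add]. unfold sa. cbn [ca Nat.mul Nat.add]. rewrite ?INR_IZR_INZ. cbn [Z.of_nat Pos.of_succ_nat Pos.succ]. unfold Q2R; cbn [Qnum Qden]. match goal with |- ?a = ?b => change (@eq R a b) end. field. }
  assert (Hh : hornerR [(-1076089#144000000); (6777541#1680000000); (-35284801#75600000000); (50236979#1871100000000); (15476089#12162150000000)] (x^2) < 0).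
  { apply (checkneg_sound _ 7 (0#1) (9#32)); [unfold Q2R; simpl; lra|unfold Q2R; simpl; lra|vm_compute; reflexivity|]. split; [unfold Q2R; simpl; nra|]. unfold Q2R; simpl; lra. }
  assert (Hv : 0 < x^6) by (apply pow_lt; lra).
  assert (Hm : x^6 * hornerR [(-1076089#144000000); (6777541#1680000000); (-35284801#75600000000); (50236979#1871100000000); (15476089#12162150000000)] (x^2) < 0) by (rewrite <- (Rmult_0_r (x^6)); apply Rmult_lt_compat_l; lra).
  lra.
Qed.


Open Scope R_scope.

Lemma PI2_ub : PI / 2 < 15708 / 10000.
Proof.
  assert (H : cos (15708/10000) <= cosP 9 (15708/10000)) by (apply tay_cos_hi; [reflexivity|lra]).
  assert (H2 : cosP 9 (15708/10000) < 0).
  { cbn [cosP Nat.mul Nat.add ca]. rewrite ?INR_IZR_INZ. cbn [Z.of_nat Pos.of_succ_nat Pos.succ]. lra. }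
  destruct (Rlt_or_le (PI/2) (15708/10000)) as [h|h]; auto.
  assert (0 <= cos (15708/10000)) by (apply cos_ge_0; pose proof PI2_RGT_0; lra). lra.
Qed.

Lemma PI2_lb : 157075 / 100000 < PI / 2.
Proof.
  assert (H : cosP 8 (157075/100000) <= cos (157075/100000)) by (apply tay_cos_lo; [reflexivity|lra]).
  assert (H2 : 0 < cosP 8 (157075/100000)).
  { cbn [cosP Nat.mul Nat.add ca]. rewrite ?INR_IZR_INZ. cbn [Z.of_nat Pos.of_succ_nat Pos.succ]. lra. }
  apply PI2_lower_bound; lra.
Qed.

Lemma I3r2 x : 3/2 <= x -> x < PI/2 ->
  -(PI^2/4 - 2) * (sin x - x * cos x)^2 + x^2 * sin x^2 - (2 * sin x + x * cos x) * (sin x - x * cos x) < 0.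
Proof.
  intros H1 H2. pose proof PI2_ub. pose proof PI2_lb.
  set (P := PI/2) in *. set (u := P - x).
  assert (Hu : 0 < u <= 708/10000) by (unfold u; lra).
  assert (Hx : x = P - u) by (unfold u; ring).
  assert (HS : sin x = cos u) by (rewrite Hx; unfold P; apply sin_shift).
  assert (HC : cos x = sin u) by (rewrite Hx; unfold P; apply cos_shift).
  assert (HPI : PI^2/4 = P^2) by (unfold P; field).
  rewrite HPI, HS, HC. clearbody u. subst x.
  set (c := cos u). set (s := sin u).
  assert (Hc1 : c <= 1) by (unfold c; pose proof (COS_bound u); lra).
  assert (Hc2 : 1 - u^2/2 <= c).
  { assert (h := tay_cos_lo 2 u eq_refl ltac:(lra)). cbn [cosP Nat.mul Nat.add ca] in h.
    rewrite ?INR_IZR_INZ in h. cbn [Z.of_nat Pos.of_succ_nat Pos.succ] in h. unfold c. nra. }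
  assert (Hs1 : s <= u).
  { assert (h := tay_sin_hi 1 u eq_refl ltac:(lra)). cbn [sinP Nat.mul Nat.add] in h. unfold sa in h. cbn [ca] in h.
    rewrite ?INR_IZR_INZ in h. cbn [Z.of_nat Pos.of_succ_nat Pos.succ] in h. unfold s. nra. }
  assert (Hs2 : u - u^3/6 <= s).
  { assert (h := tay_sin_lo 2 u eq_refl ltac:(lra)). cbn [sinP Nat.mul Nat.add] in h. unfold sa in h. cbn [ca] in h.
    rewrite ?INR_IZR_INZ in h. cbn [Z.of_nat Pos.of_succ_nat Pos.succ] in h. unfold s. nra. }
  clearbody c s.
  set (D := c - (P - u) * s).
  set (A := - u * c + P * (P - u) * s).
  set (Bf := (2 * P - u) * c - P * (P - u) * s).
  assert (Hid : -(P^2 - 2) * D^2 + (P - u)^2 * c^2 - (2 * c + (P - u) * s) * D = A * Bf - 3 * (P - u) * s * D)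
    by (unfold A, Bf, D; ring).
  match goal with |- ?g => idtac "G" g end.
  assert (HPu : 1.5 <= P - u) by lra.
  assert (HPP : 23/10 <= P * (P - u) <= 25/10) by nra.
  assert (Huc : u * c <= u) by nra.
  assert (Huc2 : u * (1 - u^2/2) <= u * c) by nra.
  assert (Hu3 : 0 <= u - u^3/6) by nra.
  assert (HA1 : A <= u * (P * (P - u) - 1 + u^2/2)).
  { unfold A. assert (P * (P - u) * s <= P * (P - u) * u) by (apply Rmult_le_compat_l; nra). nra. }
  assert (HA0 : 0 <= A).
  { unfold A. assert (P * (P - u) * (u - u^3/6) <= P * (P - u) * s) by (apply Rmult_le_compat_l; nra). nra. }
  assert (HB1 : Bf <= (2 * P - u) - P * (P - u) * (u - u^3/6)).
  { unfold Bf. assert (P * (P - u) * (u - u^3/6) <= P * (P - u) * s) by (apply Rmult_le_compat_l; nra). nra. }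
  assert (HB0 : 0 <= Bf).
  { unfold Bf. assert (P * (P - u) * s <= P * (P - u) * u) by (apply Rmult_le_compat_l; nra). nra. }
  assert (HD : 1 - u^2/2 - (P - u) * u <= D).
  { unfold D. assert ((P - u) * s <= (P - u) * u) by (apply Rmult_le_compat_l; nra). nra. }
  assert (HD0 : 0 < 1 - u^2/2 - (P - u) * u) by nra.
  assert (HR : 3 * (P - u) * (u - u^3/6) * (1 - u^2/2 - (P - u) * u) <= 3 * (P - u) * s * D).
  { apply Rmult_le_compat; try nra. }
  assert (HL : A * Bf <= u * (P * (P - u) - 1 + u^2/2) * ((2 * P - u) - P * (P - u) * (u - u^3/6))).
  { apply Rmult_le_compat; try nra. }
  assert (Hpoly : (P * (P - u) - 1 + u^2/2) * ((2 * P - u) - P * (P - u) * (u - u^3/6))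
                  < 3 * (P - u) * (1 - u^2/6) * (1 - u^2/2 - (P - u) * u)).
  { assert (HP1 : 157075/100000 <= P <= 15708/10000) by lra.
    assert (HP2 : (157075/100000)^2 <= P^2 <= (15708/10000)^2) by (split; apply pow_incr; lra).
    assert (HP3 : (157075/100000)^3 <= P^3 <= (15708/10000)^3) by (split; apply pow_incr; lra).
    assert (HP4 : (157075/100000)^4 <= P^4 <= (15708/10000)^4) by (split; apply pow_incr; lra).
    assert (HP0 : P^1 = P) by ring.
    assert (Hv1 : 0 <= u^1 <= (708/10000)^1) by (split; [apply pow_le; lra| apply pow_incr; lra]).
    assert (Hv2 : 0 <= u^2 <= (708/10000)^2) by (split; [apply pow_le; lra| apply pow_incr; lra]).
    assert (Hv3 : 0 <= u^3 <= (708/10000)^3) by (split; [apply pow_le; lra| apply pow_incr; lra]).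
    assert (Hv4 : 0 <= u^4 <= (708/10000)^4) by (split; [apply pow_le; lra| apply pow_incr; lra]).
    assert (Hv5 : 0 <= u^5 <= (708/10000)^5) by (split; [apply pow_le; lra| apply pow_incr; lra]).
    assert (Hv6 : 0 <= u^6 <= (708/10000)^6) by (split; [apply pow_le; lra| apply pow_incr; lra]).
    assert (Hb0 : (1021/10000) <= ((5/1)*P^1 + (-2/1)*P^3)) by (simpl in *; lra).
    assert (Hb1 : (-3801/10000) <= ((-4/1)*P^0 + (-1/1)*P^2 + (1/1)*P^4)) by (simpl in *; lra).
    assert (Hm1 : (-3801/10000) * u^1 <= ((-4/1)*P^0 + (-1/1)*P^2 + (1/1)*P^4) * u^1) by (apply Rmult_le_compat_r; lra).
    assert (Hb2 : (-15197/5000) <= ((3/1)*P^1 + (-2/1)*P^3)) by (simpl in *; lra).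
    assert (Hm2 : (-15197/5000) * u^2 <= ((3/1)*P^1 + (-2/1)*P^3) * u^2) by (apply Rmult_le_compat_r; lra).
    assert (Hb3 : (3831/1000) <= ((-1/2)*P^0 + (13/6)*P^2 + (-1/6)*P^4)) by (simpl in *; lra).
    assert (Hm3 : (3831/1000) * u^3 <= ((-1/2)*P^0 + (13/6)*P^2 + (-1/6)*P^4) * u^3) by (apply Rmult_le_compat_r; lra).
    assert (Hb4 : (-1867/2000) <= ((-17/12)*P^1 + (1/3)*P^3)) by (simpl in *; lra).
    assert (Hm4 : (-1867/2000) * u^4 <= ((-17/12)*P^1 + (1/3)*P^3) * u^4) by (apply Rmult_le_compat_r; lra).
    assert (Hb5 : (-3669/10000) <= ((1/4)*P^0 + (-1/4)*P^2)) by (simpl in *; lra).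
    assert (Hm5 : (-3669/10000) * u^5 <= ((1/4)*P^0 + (-1/4)*P^2) * u^5) by (apply Rmult_le_compat_r; lra).
    assert (Hb6 : (327/2500) <= ((1/12)*P^1)) by (simpl in *; lra).
    assert (Hm6 : (327/2500) * u^6 <= ((1/12)*P^1) * u^6) by (apply Rmult_le_compat_r; lra).
    assert (Hid2 : 3 * (P - u) * (1 - u^2/6) * (1 - u^2/2 - (P - u) * u) - (P * (P - u) - 1 + u^2/2) * ((2 * P - u) - P * (P - u) * (u - u^3/6)) = ((5/1)*P^1 + (-2/1)*P^3) * u^0 + ((-4/1)*P^0 + (-1/1)*P^2 + (1/1)*P^4) * u^1 + ((3/1)*P^1 + (-2/1)*P^3) * u^2 + ((-1/2)*P^0 + (13/6)*P^2 + (-1/6)*P^4) * u^3 + ((-17/12)*P^1 + (1/3)*P^3) * u^4 + ((1/4)*P^0 + (-1/4)*P^2) * u^5 + ((1/12)*P^1) * u^6) by field.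
    simpl in *; lra. }
  assert (u * (P * (P - u) - 1 + u^2/2) * ((2 * P - u) - P * (P - u) * (u - u^3/6))
          < 3 * (P - u) * (u - u^3/6) * (1 - u^2/2 - (P - u) * u)).
  { replace (3 * (P - u) * (u - u^3/6) * (1 - u^2/2 - (P - u) * u)) with
      (u * (3 * (P - u) * (1 - u^2/6) * (1 - u^2/2 - (P - u) * u))) by field.
    rewrite Rmult_assoc. apply Rmult_lt_compat_l; lra. }
  lra.
Qed.

Open Scope R_scope.

Lemma U_deriv p t : 0 < t -> is_derive (U p) t (- exp ((p - 1) * ln t)).
Proof.
  intros Ht. unfold U. destruct (Req_EM_T p 0) as [Hp|Hp].
  - subst p.
    replace ((0 - 1) * ln t) with (- ln t) by ring. rewrite exp_Ropp, exp_ln by lra.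
    apply (is_derive_ext (fun t => - ln t)); [intros; reflexivity|].
    auto_derive; [lra|]. match goal with |- ?a = ?b => change (@eq R a b) end. field. lra.
  - unfold Rpower.
    apply (is_derive_ext (fun t => (1 - exp (p * ln t)) / p)); [intros; reflexivity|].
    replace ((p - 1) * ln t) with (p * ln t + - ln t) by ring.
    rewrite exp_plus, exp_Ropp, exp_ln by lra.
    auto_derive; [lra|].
    match goal with |- ?a = ?b => change (@eq R a b) end. field. lra.
Qed.

Lemma U_one p : U p 1 = 0.
Proof. unfold U, Rpower. rewrite ln_1. destruct (Req_EM_T p 0); [ring|]. rewrite Rmult_0_r, exp_0. field; auto. Qed.

Lemma U_pos p t : 0 < t < 1 -> 0 < U p t.
Proof.
  intros Ht. assert (Hl : ln t < 0) by (rewrite <- ln_1; apply ln_increasing; lra).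
  unfold U, Rpower. destruct (Req_EM_T p 0) as [Hp|Hp]; [lra|].
  destruct (Rlt_or_le 0 p) as [Hp'|Hp'].
  - assert (exp (p * ln t) < 1) by (rewrite <- exp_0; apply exp_increasing; nra).
    apply Rdiv_lt_0_compat; lra.
  - assert (Hp2 : p < 0) by lra.
    assert (1 < exp (p * ln t)) by (rewrite <- exp_0; apply exp_increasing; nra).
    replace ((1 - exp (p * ln t)) / p) with ((exp (p * ln t) - 1) / (- p)) by (field; lra).
    apply Rdiv_lt_0_compat; lra.
Qed.

Lemma U_near1 p d : 0 < d -> exists a, 0 < a /\ forall t, 1 - a < t < 1 -> U p t < d.
Proof.
  intros Hd. assert (Hc := cont_of_deriv _ _ _ (U_deriv p 1 ltac:(lra))).
  destruct (Hc d Hd) as [a [Ha Hal]]. exists (Rmin a (1/2)). split.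
  - apply Rmin_pos; lra.
  - intros t Ht. assert (Hm1 := Rmin_l a (1/2)). assert (Hm2 := Rmin_r a (1/2)).
    assert (H := Hal t). simpl in H. unfold R_dist in H. rewrite U_one in H.
    assert (Rabs (U p t - 0) < d).
    { apply H. split; [unfold D_x, no_cond; split; auto; lra|].
      rewrite Rabs_left by lra. lra. }
    rewrite Rminus_0_r in H0. apply Rabs_def2 in H0. lra.
Qed.

Open Scope R_scope.

Lemma basics t : 0 < t < PI / 2 ->
  0 < sin t /\ 0 < cos t /\ sin t < t /\ cos t < 1 /\ t * cos t < sin t /\ t ^ 2 <= 987/400.
Proof.
  intros Ht. pose proof PI2_ub. pose proof PI2_RGT_0.
  assert (Hs : 0 < sin t) by (apply sin_gt_0; lra).
  assert (Hc : 0 < cos t) by (apply cos_gt_0; lra).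
  assert (H1 := tay_sin_hi 3 t eq_refl ltac:(lra)).
  assert (H2 := tay_cos_hi 3 t eq_refl ltac:(lra)).
  assert (H3 := tay_sin_lo 2 t eq_refl ltac:(lra)).
  normP H1. normP H2. normP H3.
  assert (Ht2 : t^2 < 25/10) by nra.
  assert (Ht3 : 0 < t^3) by (apply pow_lt; lra).
  assert (E5 : t^5 = t^3*t^2) by ring.
  assert (E4 : t * t^4 = t^3*t^2) by ring.
  assert (HtC : t * cos t <= t * (1 - t^2/2 + t^4/24)) by (apply Rmult_le_compat_l; lra).
  repeat split; try lra; try nra.
Qed.

Lemma sx_deriv t : 0 < t -> is_derive (fun t => sin t / t) t ((t * cos t - sin t) / t ^ 2).
Proof. intros. auto_derive; [lra|]. match goal with |- ?a = ?b => change (@eq R a b) end. field. lra. Qed.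


Definition Fp (p t : R) := U p (sin t / t).
Definition Gq (q t : R) := U q (cos t).
Definition dF (p t : R) := exp ((p - 1) * ln (sin t / t)) * (sin t - t * cos t) / t ^ 2.
Definition dG (q t : R) := exp ((q - 1) * ln (cos t)) * sin t.
Definition phi (p q t : R) := (p - 1) * ln (sin t / t) - (q - 1) * ln (cos t).
Definition rr (p q t : R) := exp (phi p q t) * (sin t - t * cos t) / (t ^ 2 * sin t).
Definition Lam (p q t : R) := let S := sin t in let C := cos t in let D := S - t * C in
  - p * C * D ^ 2 + (q - 1) * t * S ^ 2 * D + t ^ 2 * S ^ 2 * C - S * C * D - 2 * t * C ^ 2 * D.
Definition drr (p q t : R) := exp (phi p q t) * Lam p q t / (t ^ 3 * sin t ^ 2 * cos t).

Lemma dF_ok p t : 0 < t < PI / 2 -> is_derive (Fp p) t (dF p t).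
Proof.
  intros Ht. destruct (basics t Ht) as (Hs & Hc & Hst & Hc1 & HD & _).
  assert (Hsx : 0 < sin t / t) by (apply Rdiv_lt_0_compat; lra).
  unfold Fp. eapply dext; [intros; reflexivity| |
    apply (@is_derive_comp R_AbsRing R_NormedModule (U p) (fun t => sin t / t));
    [apply U_deriv; exact Hsx | apply sx_deriv; lra]].
  unfold dF, scal; simpl. unfold mult; simpl.
  match goal with |- ?a = ?b => change (@eq R a b) end. field. lra.
Qed.

Lemma dG_ok q t : 0 < t < PI / 2 -> is_derive (Gq q) t (dG q t).
Proof.
  intros Ht. destruct (basics t Ht) as (Hs & Hc & Hst & Hc1 & HD & _).
  unfold Gq. eapply dext; [intros; reflexivity| |
    apply (@is_derive_comp R_AbsRing R_NormedModule (U q) cos);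
    [apply U_deriv; exact Hc | apply is_derive_cos]].
  unfold dG, scal; simpl. unfold mult; simpl.
  match goal with |- ?a = ?b => change (@eq R a b) end. field.
Qed.

Lemma drr_ok p q t : 0 < t < PI / 2 -> is_derive (rr p q) t (drr p q t).
Proof.
  intros Ht. destruct (basics t Ht) as (Hs & Hc & Hst & Hc1 & HD & _).
  assert (Hsx : 0 < sin t / t) by (apply Rdiv_lt_0_compat; lra).
  unfold rr, phi. auto_derive.
  { repeat split; try lra. assert (0 < t * (t * 1) * sin t) by (repeat apply Rmult_lt_0_compat; lra). apply Rgt_not_eq. exact H. }
  unfold drr, Lam, phi, Rdiv, Rminus. match goal with |- ?a = ?b => change (@eq R a b) end. field. repeat split; lra.
Qed.


Lemma dF_eq p q t : 0 < t < PI / 2 -> dF p t = rr p q t * dG q t.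
Proof.
  intros Ht. destruct (basics t Ht) as (Hs & Hc & Hst & Hc1 & HD & _).
  unfold dF, rr, dG.
  replace (exp ((p - 1) * ln (sin t / t))) with (exp (phi p q t) * exp ((q - 1) * ln (cos t)))
    by (rewrite <- exp_plus; unfold phi; f_equal; ring).
  match goal with |- ?a = ?b => change (@eq R a b) end. field. lra.
Qed.

Lemma rr_pos p q t : 0 < t < PI / 2 -> 0 < rr p q t.
Proof.
  intros Ht. destruct (basics t Ht) as (Hs & Hc & Hst & Hc1 & HD & _).
  unfold rr. apply Rdiv_lt_0_compat.
  - apply Rmult_lt_0_compat; [apply exp_pos|lra].
  - apply Rmult_lt_0_compat; [apply pow_lt|]; lra.
Qed.

Lemma drr_sign p q t : 0 < t < PI / 2 -> (0 < Lam p q t -> 0 < drr p q t) /\ (Lam p q t < 0 -> drr p q t < 0).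
Proof.
  intros Ht. destruct (basics t Ht) as (Hs & Hc & Hst & Hc1 & HD & _).
  assert (Hden : 0 < t ^ 3 * sin t ^ 2 * cos t) by (repeat apply Rmult_lt_0_compat; try apply pow_lt; lra).
  assert (He := exp_pos (phi p q t)).
  unfold drr. split; intros HL.
  - apply Rdiv_lt_0_compat; [apply Rmult_lt_0_compat|]; lra.
  - unfold Rdiv. assert (0 < / (t ^ 3 * sin t ^ 2 * cos t)) by (apply Rinv_0_lt_compat; lra).
    assert (exp (phi p q t) * Lam p q t < 0) by (rewrite <- (Rmult_0_r (exp (phi p q t))); apply Rmult_lt_compat_l; lra).
    nra.
Qed.

Lemma Fp_small p d m : 0 < d -> 0 < m -> exists e, 0 < e < m /\ Fp p e < d.
Proof.
  intros Hd Hm. destruct (U_near1 p d Hd) as [a [Ha Hu]].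
  set (e := Rmin (m / 2) (Rmin (1/2) a)).
  assert (He1 : e <= m / 2) by apply Rmin_l.
  assert (He2 : e <= 1/2) by (eapply Rle_trans; [apply Rmin_r|apply Rmin_l]).
  assert (He3 : e <= a) by (eapply Rle_trans; [apply Rmin_r|apply Rmin_r]).
  assert (He0 : 0 < e) by (apply Rmin_pos; [lra|apply Rmin_pos; lra]).
  exists e. split; [lra|]. unfold Fp. apply Hu.
  pose proof PI2_1.
  destruct (basics e ltac:(lra)) as (Hs & Hc & Hst & _).
  assert (H3 := tay_sin_lo 2 e eq_refl ltac:(lra)). normP H3.
  split.
  - apply (Rmult_lt_reg_r e); [lra|]. unfold Rdiv. rewrite Rmult_assoc, Rinv_l by lra. nra.
  - apply (Rmult_lt_reg_r e); [lra|]. unfold Rdiv. rewrite Rmult_assoc, Rinv_l by lra. lra.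
Qed.

Lemma Gq_small q d m : 0 < d -> 0 < m -> exists e, 0 < e < m /\ Gq q e < d.
Proof.
  intros Hd Hm. destruct (U_near1 q d Hd) as [a [Ha Hu]].
  set (e := Rmin (m / 2) (Rmin (1/2) a)).
  assert (He1 : e <= m / 2) by apply Rmin_l.
  assert (He2 : e <= 1/2) by (eapply Rle_trans; [apply Rmin_r|apply Rmin_l]).
  assert (He3 : e <= a) by (eapply Rle_trans; [apply Rmin_r|apply Rmin_r]).
  assert (He0 : 0 < e) by (apply Rmin_pos; [lra|apply Rmin_pos; lra]).
  exists e. split; [lra|]. unfold Gq. apply Hu.
  pose proof PI2_1.
  destruct (basics e ltac:(lra)) as (Hs & Hc & Hst & Hc1 & _).
  assert (H3 := tay_cos_lo 2 e eq_refl ltac:(lra)). normP H3.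
  split; nra.
Qed.

Lemma T_incr p q : (forall t, 0 < t < PI / 2 -> 0 < Lam p q t) -> increasing_on_0_pi2 (T p q).
Proof.
  intros HL x y Hx Hxy Hy. unfold T.
  apply (GL (PI/2) (Fp p) (Gq q) (rr p q) (dF p) (dG q) (drr p q)); auto.
  - apply dF_ok.
  - apply dG_ok.
  - apply drr_ok.
  - apply dF_eq.
  - intros t Ht. destruct (basics t Ht) as (Hs & _). unfold dG. apply Rmult_lt_0_compat; [apply exp_pos|lra].
  - intros t Ht. destruct (basics t Ht) as (Hs & Hc & Hst & Hc1 & _). apply U_pos; lra.
  - apply rr_pos.
  - intros t Ht. apply (drr_sign p q t Ht). auto.
  - intros d m Hd Hm. apply Fp_small; auto.
Qed.

Lemma T_decr p q : (forall t, 0 < t < PI / 2 -> Lam p q t < 0) -> decreasing_on_0_pi2 (T p q).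
Proof.
  intros HL x y Hx Hxy Hy. unfold T.
  assert (Hpos : forall t, 0 < t < PI / 2 -> 0 < Fp p t /\ 0 < Gq q t).
  { intros t Ht. destruct (basics t Ht) as (Hs & Hc & Hst & Hc1 & _).
    split; [apply U_pos|apply U_pos]; split; try lra; try (apply Rdiv_lt_0_compat; lra).
    apply (Rmult_lt_reg_r t); [lra|]. unfold Rdiv. rewrite Rmult_assoc, Rinv_l by lra. lra. }
  assert (H := GL (PI/2) (Gq q) (Fp p) (fun t => / rr p q t) (dG q) (dF p)
     (fun t => - drr p q t / rr p q t ^ 2)).
  assert (Hlt : Gq q x / Fp p x < Gq q y / Fp p y).
  { apply H; auto.
    - apply dG_ok.
    - apply dF_ok.
    - intros t Ht. apply is_derive_inv; [apply drr_ok; auto|]. apply Rgt_not_eq, rr_pos; auto.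
    - intros t Ht. rewrite (dF_eq p q t Ht). pose proof (rr_pos p q t Ht).
      match goal with |- ?a = ?b => change (@eq R a b) end. field. lra.
    - intros t Ht. destruct (basics t Ht) as (Hs & Hc & Hst & Hc1 & HD & _). unfold dF.
      apply Rdiv_lt_0_compat; [apply Rmult_lt_0_compat; [apply exp_pos|lra]|apply pow_lt; lra].
    - intros t Ht. apply Hpos; auto.
    - intros t Ht. apply Rinv_0_lt_compat, rr_pos; auto.
    - intros t Ht. pose proof (rr_pos p q t Ht). assert (drr p q t < 0) by (apply (drr_sign p q t Ht); auto).
      apply Rdiv_lt_0_compat; [lra|apply pow_lt; lra].
    - intros d m Hd Hm. apply Gq_small; auto. }
  destruct (Hpos x ltac:(lra)) as [Fx Gx]. destruct (Hpos y ltac:(lra)) as [Fy Gy].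
  fold (Fp p x) (Fp p y) (Gq q x) (Gq q y).
  apply (Rmult_lt_reg_r (Gq q x * Gq q y / (Fp p x * Fp p y))).
  { apply Rdiv_lt_0_compat; apply Rmult_lt_0_compat; auto. }
  replace (Fp p y / Gq q y * (Gq q x * Gq q y / (Fp p x * Fp p y))) with (Gq q x / Fp p x) by (field; lra).
  replace (Fp p x / Gq q x * (Gq q x * Gq q y / (Fp p x * Fp p y))) with (Gq q y / Fp p y) by (field; lra).
  exact Hlt.
Qed.

Open Scope R_scope.

Lemma I1 t : 0 < t < PI / 2 -> 0 < t * sin t ^ 2 - 3 * cos t * (sin t - t * cos t).
Proof. intros Ht. destruct (basics t Ht) as (_ & _ & _ & _ & _ & HZ). apply I1poly; lra. Qed.

Lemma LamE p q t : Lam p q t = let S := sin t in let C := cos t in let D := S - t * C in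
  - p * C * D ^ 2 + (q - 1) * t * S ^ 2 * D + t ^ 2 * S ^ 2 * C - S * C * D - 2 * t * C ^ 2 * D.
Proof. reflexivity. Qed.

Lemma L2 t : 0 < t < PI / 2 -> 0 < Lam (7/5) 1 t.
Proof.
  intros Ht. destruct (basics t Ht) as (Hs & Hc & _ & _ & _ & HZ).
  assert (H := I2poly t ltac:(lra) HZ). rewrite LamE. cbv zeta.
  set (N := (-(7/5) * (sin t - t * cos t)^2 + t^2 * sin t^2 - sin t * (sin t - t * cos t) - 2 * t * cos t * (sin t - t * cos t))) in H.
  replace (- (7/5) * cos t * (sin t - t * cos t) ^ 2 + (1 - 1) * t * sin t ^ 2 * (sin t - t * cos t) +
    t ^ 2 * sin t ^ 2 * cos t - sin t * cos t * (sin t - t * cos t) - 2 * t * cos t ^ 2 * (sin t - t * cos t))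
    with (cos t * N) by (unfold N; ring).
  apply Rmult_lt_0_compat; lra.
Qed.

Lemma L3 t : 0 < t < PI / 2 -> Lam (PI ^ 2 / 4 - 1) 1 t < 0.
Proof.
  intros Ht. destruct (basics t Ht) as (Hs & Hc & _ & _ & _ & HZ).
  set (N := -(PI^2/4 - 2) * (sin t - t * cos t)^2 + t^2 * sin t^2 - (2 * sin t + t * cos t) * (sin t - t * cos t)).
  assert (HN : N < 0).
  { destruct (Rle_or_lt t (3/2)) as [h|h].
    - assert (H := I3poly t ltac:(lra) ltac:(nra)).
      pose proof PI2_lb.
      assert (HP : 31415/10000 * (31415/10000) < PI * PI) by nra.
      assert (0 <= (sin t - t * cos t)^2) by apply pow2_ge_0.
      unfold N. simpl in *. nra.
    - apply I3r2; lra. }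
  rewrite LamE. cbv zeta.
  replace (- (PI ^ 2 / 4 - 1) * cos t * (sin t - t * cos t) ^ 2 + (1 - 1) * t * sin t ^ 2 * (sin t - t * cos t) +
    t ^ 2 * sin t ^ 2 * cos t - sin t * cos t * (sin t - t * cos t) - 2 * t * cos t ^ 2 * (sin t - t * cos t))
    with (cos t * N) by (unfold N; field).
  rewrite <- (Rmult_0_r (cos t)). apply Rmult_lt_compat_l; lra.
Qed.

Lemma L4 t : 0 < t < PI / 2 -> Lam (46/35) (34/35) t < 0.
Proof.
  intros Ht. destruct (basics t Ht) as (Hs & Hc & _ & _ & _ & HZ).
  assert (H := I4poly t ltac:(lra) HZ). rewrite LamE. cbv zeta.
  replace (34/35 - 1) with (-(1/35)) by field. exact H.
Qed.

Theorem proposition1 :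
  (forall p q : R, q > 1 -> p <= 3 * q - 8 / 5 ->
     increasing_on_0_pi2 (T p q))
  /\ (forall p : R, p <= 7 / 5 -> increasing_on_0_pi2 (T p 1))
  /\ (forall p : R, p >= PI ^ 2 / 4 - 1 -> decreasing_on_0_pi2 (T p 1))
  /\ (forall p q : R, 34 / 35 < q < 1 -> p >= PI ^ 2 / 4 - 1 ->
     decreasing_on_0_pi2 (T p q))
  /\ (forall p q : R, q <= 34 / 35 -> p >= 3 * q - 8 / 5 ->
     decreasing_on_0_pi2 (T p q)).
Proof.
  assert (Hk : forall p q t, 0 < t < PI / 2 -> exists C D E,
     0 < C /\ 0 < D /\ 0 < E /\
     Lam p q t = Lam (7/5) 1 t + (q - 1) * (D * E) + (3 * q - 8/5 - p) * (C * D^2) /\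
     Lam p q t = Lam (46/35) (34/35) t + (q - 34/35) * (D * E) + (3 * q - 8/5 - p) * (C * D^2) /\
     Lam p q t = Lam (PI^2/4 - 1) 1 t + (q - 1) * (t * sin t ^ 2 * D) + (PI^2/4 - 1 - p) * (C * D^2) /\
     0 < t * sin t ^ 2 * D).
  { intros p q t Ht. destruct (basics t Ht) as (Hs & Hc & _ & _ & HD & _).
    exists (cos t), (sin t - t * cos t), (t * sin t ^ 2 - 3 * cos t * (sin t - t * cos t)).
    split; [lra|]. split; [lra|]. split; [apply I1; auto|].
    rewrite !LamE. cbv zeta.
    split; [field|]. split; [field|]. split; [field|].
    apply Rmult_lt_0_compat; [apply Rmult_lt_0_compat; [lra|apply pow_lt; lra]|lra]. }
  repeat split.
  - intros p q Hq Hp. apply T_incr. intros t Ht.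
    destruct (Hk p q t Ht) as (C & D & E & HC & HD & HE & E1 & _).
    assert (0 <= (3 * q - 8/5 - p) * (C * D^2)) by (apply Rmult_le_pos; [lra|apply Rmult_le_pos; [lra|apply pow2_ge_0]]).
    assert (0 < (q - 1) * (D * E)) by (apply Rmult_lt_0_compat; [lra|apply Rmult_lt_0_compat; lra]).
    pose proof (L2 t Ht). lra.
  - intros p Hp. apply T_incr. intros t Ht.
    destruct (Hk p 1 t Ht) as (C & D & E & HC & HD & HE & E1 & _).
    assert (0 <= (3 * 1 - 8/5 - p) * (C * D^2)) by (apply Rmult_le_pos; [lra|apply Rmult_le_pos; [lra|apply pow2_ge_0]]).
    pose proof (L2 t Ht). rewrite E1. replace ((1 - 1) * (D * E)) with 0 by ring. lra.
  - intros p Hp. apply T_decr. intros t Ht.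
    destruct (Hk p 1 t Ht) as (C & D & E & HC & HD & HE & _ & _ & E3 & _).
    assert (0 <= (p - (PI^2/4 - 1)) * (C * D^2)) by (apply Rmult_le_pos; [lra|apply Rmult_le_pos; [lra|apply pow2_ge_0]]).
    pose proof (L3 t Ht). rewrite E3. replace ((1 - 1) * (t * sin t ^ 2 * D)) with 0 by ring. lra.
  - intros p q Hq Hp. apply T_decr. intros t Ht.
    destruct (Hk p q t Ht) as (C & D & E & HC & HD & HE & _ & _ & E3 & HW).
    assert (0 <= (p - (PI^2/4 - 1)) * (C * D^2)) by (apply Rmult_le_pos; [lra|apply Rmult_le_pos; [lra|apply pow2_ge_0]]).
    assert (0 < (1 - q) * (t * sin t ^ 2 * D)) by (apply Rmult_lt_0_compat; lra).
    pose proof (L3 t Ht). lra.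
  - intros p q Hq Hp. apply T_decr. intros t Ht.
    destruct (Hk p q t Ht) as (C & D & E & HC & HD & HE & _ & E2 & _).
    assert (0 <= (p - (3 * q - 8/5)) * (C * D^2)) by (apply Rmult_le_pos; [lra|apply Rmult_le_pos; [lra|apply pow2_ge_0]]).
    assert (0 <= (34/35 - q) * (D * E)) by (apply Rmult_le_pos; [lra|apply Rmult_le_pos; lra]).
    pose proof (L4 t Ht). lra.
Qed.
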